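(* Suppose Assumptions 3 and 5 hold. Then: (i) for each $n$, $z\mapsto m_n(z)$ is non-increasing on $(0,\infty)$, and for every fixed $z\in(0,1)$, $m_n(z)\to\infty$ as $n\to\infty$; (ii) if there exist constants $k>1$, $\eta<1$ and $K>1$ such that $\theta_{n,\lfloor kl_n\rfloor}/\theta_{n,l_n}\le\eta$ for all $n\ge K$ and every integer sequence $(l_n)$ with $l_n\to\infty$ and $l_n\le d_n$ (with $\theta_{n,m}:=0$ for $m>q_n$), then $m_n(z_1)\asymp m_n(z_2)$ for any fixed $z_1,z_2\in(0,1)$.
   Context: For each $n$, let $\boldsymbol\mu\in\mathbb R^n$, $\boldsymbol\Omega$ positive definite, integers $0=\nu_0<\cdots<\nu_{q_n}$, and nested projection matrices $\mathbf P_m=\mathbf X_m(\mathbf X_m^\top\mathbf X_m)^{-1}\mathbf X_m^\top$ ($\mathbf X_m$ the first $\nu_m$ columns of a fixed full-rank design, $\mathbf P_0=\mathbf 0$) be given. Define $\theta_{n,m}=\dfrac{n^{-1}\boldsymbol\mu^\top(\mathbf P_m-\mathbf P_{m-1})\boldsymbol\mu}{\mathrm{tr}\{(\mathbf P_m-\mathbf P_{m-1})\boldsymbol\Omega\}}$ for $m=1,\dots,q_n$, and $d_n=\max\{m:\theta_{n,m}>0\}$. For $z\in(0,1)$, $m_n(z)=\max\big(\{1\}\cup\{m\in\{2,\dots,q_n\}:\theta_{n,m}>\tfrac{z}{(1-z)n}\}\big)$, and $m_n(z)=1$ for $z\ge1$. Assumption 3: for each large $n$, $\theta_{n,1}\ge\cdots\ge\theta_{n,q_n}$.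 Assumption 5: for every fixed positive integer $m$ there are constants $\bar\theta_m>0$ and $K_m>0$ such that for all $n\ge K_m$, $m\le d_n$ and $\theta_{n,m}\ge\bar\theta_m$. Notation: $a_n\asymp b_n$ means $a_n/b_n$ and $b_n/a_n$ are bounded for large $n$. *)

(* Defs.v *)
From HB Require Import structures.
From mathcomp Require Import all_boot all_order all_algebra.
From mathcomp Require Import reals.
Set Implicit Arguments. Unset Strict Implicit. Unset Printing Implicit Defensive.
Import Order.TTheory GRing.Theory Num.Theory.
Local Open Scope ring_scope.

(* The data, for every sample size n:
   - mu n    : the mean vector in R^n,
   - Omega n : an n x n (positive definite) matrix,
   - q n     : the number q_n of nested models,
   - nu n m  : the integers nu_0 < ... < nu_{q_n} (nu n 0 = 0),
   - X n i j : entry (i, j) of the fixed design matrix (row i < n, column j);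
               X_m is formed by the first nu_m columns. *)
Section Setting.
Variable R : realType.
Variable mu : forall n : nat, 'cV[R]_n.
Variable Omega : forall n : nat, 'M[R]_n.
Variable q : nat -> nat.
Variable nu : nat -> nat -> nat.
Variable X : forall n : nat, 'I_n -> nat -> R.

Definition Xm (n m : nat) : 'M[R]_(n, nu n m) :=
  \matrix_(i < n, j < nu n m) X i j.

Definition Pm (n m : nat) : 'M[R]_n :=
  if m is 0 then 0
  else Xm n m *m invmx ((Xm n m)^T *m Xm n m) *m (Xm n m)^T.

Definition theta (n m : nat) : R :=
  ((n%:R)^-1 * ((mu n)^T *m (Pm n m - Pm n m.-1) *m mu n) ord0 ord0)
  / \tr ((Pm n m - Pm n m.-1) *m Omega n).

Definition theta_ext (n m : nat) : R :=
  if (1 <= m <= q n)%N then theta n m else 0.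

Definition dn (n : nat) : nat :=
  \max_(1 <= m < (q n).+1 | 0 < theta n m) m.

Definition mn (n : nat) (z : R) : nat :=
  if z < 1 then
    maxn 1 (\max_(2 <= m < (q n).+1 | z / ((1 - z) * n%:R) < theta n m) m)
  else 1%N.

End Setting.

Definition pos_def (R : realType) (n : nat) (A : 'M[R]_n) : Prop :=
  A^T = A /\ forall x : 'cV[R]_n, x != 0 -> 0 < (x^T *m A *m x) ord0 ord0.

(* Main.v *)
Require Import Defs.
From HB Require Import structures.
From mathcomp Require Import all_boot all_order all_algebra.
From mathcomp Require Import reals.
From mathcomp Require Import ring lra zify.
Import Order.TTheory GRing.Theory Num.Theory.
Local Open Scope ring_scope.

Lemma maxr_ub (a b m : nat) (P : pred nat) :
  (a <= m < b)%N -> P m -> (m <= \max_(a <= i < b | P i) i)%N.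
Proof. by move=> Hm Pm; apply: (leq_bigmax_seq m) => //; rewrite mem_index_iota. Qed.

Lemma maxr_lub (a b c : nat) (P : pred nat) :
  (forall i, (a <= i < b)%N -> P i -> (i <= c)%N) ->
  (\max_(a <= i < b | P i) i <= c)%N.
Proof. by move=> H; apply/bigmax_leqP_seq => i; rewrite mem_index_iota; apply: H. Qed.

Lemma bernoulli (R : realFieldType) (x : R) (J : nat) : 0 <= x ->
  1 + J%:R * x <= (1 + x) ^+ J.
Proof.
move=> x0; elim: J => [|J IH]; first by rewrite mul0r addr0 expr0.
rewrite exprS -natr1.
have h0 : 0 <= J%:R * x by rewrite mulr_ge0.
have h1 : 0 <= (1 + x) ^+ J by rewrite exprn_ge0 // addr_ge0.
nra.
Qed.

Lemma geom_small (R : realType) (e c : R) : 0 <= e -> e < 1 -> 0 <= c ->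
  exists J : nat, e ^+ J * c <= 1.
Proof.
move=> e0 e1 c0.
have [->|en0] := eqVneq e 0.
  by exists 1%N; rewrite expr1 mul0r ler01.
have ep : 0 < e by rewrite lt0r en0.
set b := e^-1.
have eb : e * b = 1 by rewrite /b mulfV.
have b1 : 1 < b by rewrite /b invf_gt1.
set x := b - 1.
have xp : 0 < x by rewrite /x subr_gt0.
exists (Num.truncn (c / x)).+1.
have h1 : c / x < (Num.truncn (c / x)).+1%:R by apply: archimedean.Num.Theory.truncnS_gt.
have h2 : c < (Num.truncn (c / x)).+1%:R * x by rewrite -ltr_pdivrMr.
have h3 := @bernoulli _ x (Num.truncn (c / x)).+1 (ltW xp).
move: h3; rewrite (_ : 1 + x = b); last by rewrite /x; ring.
move=> h3.
have hb : c <= b ^+ (Num.truncn (c / x)).+1 by lra.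
have : e ^+ (Num.truncn (c / x)).+1 * c <= e ^+ (Num.truncn (c / x)).+1 * b ^+ (Num.truncn (c / x)).+1.
  by apply: ler_wpM2l => //; rewrite exprn_ge0.
by rewrite -exprMn eb expr1n.
Qed.

Theorem lemmaA2 (R : realType)
  (mu : forall n : nat, 'cV[R]_n) (Omega : forall n : nat, 'M[R]_n)
  (q : nat -> nat) (nu : nat -> nat -> nat) (X : forall n : nat, 'I_n -> nat -> R)
  (* setting *)
  (HOmega : forall n, pos_def (Omega n))
  (Hnu0 : forall n, nu n 0%N = 0%N)
  (Hnu_incr : forall n m, (m < q n)%N -> (nu n m < nu n m.+1)%N)
  (Hfull : forall n, \rank (Xm nu X n (q n)) = nu n (q n))
  (* Assumption 3 *)
  (HA3 : exists N : nat, forall n, (N <= n)%N ->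
           forall m, (1 <= m)%N -> (m < q n)%N ->
             theta mu Omega nu X n m.+1 <= theta mu Omega nu X n m)
  (* Assumption 5 *)
  (HA5 : forall m : nat, (1 <= m)%N ->
           exists thetabar : R, 0 < thetabar /\
           exists K : nat, forall n, (K <= n)%N ->
             (m <= dn mu Omega q nu X n)%N /\ thetabar <= theta mu Omega nu X n m) :
  (* (i) *)
  ((forall n (z1 z2 : R), 0 < z1 -> z1 <= z2 ->
       (mn mu Omega q nu X n z2 <= mn mu Omega q nu X n z1)%N)
   /\ (forall z : R, 0 < z -> z < 1 ->
       forall M : nat, exists N : nat, forall n, (N <= n)%N ->
         (M <= mn mu Omega q nu X n z)%N))
  /\
  (* (ii) *)
  ((exists (k eta : R) (K : nat), 1 < k /\ eta < 1 /\ (1 < K)%N /\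
      forall l : nat -> nat,
        (forall M : nat, exists N : nat, forall n, (N <= n)%N -> (M <= l n)%N) ->
        (forall n, (l n <= dn mu Omega q nu X n)%N) ->
        forall n, (K <= n)%N ->
          theta_ext mu Omega q nu X n (Num.truncn (k * (l n)%:R))
            / theta_ext mu Omega q nu X n (l n) <= eta) ->
   forall z1 z2 : R, 0 < z1 -> z1 < 1 -> 0 < z2 -> z2 < 1 ->
     exists (C : R) (N : nat), forall n, (N <= n)%N ->
       (mn mu Omega q nu X n z1)%:R / (mn mu Omega q nu X n z2)%:R <= C /\
       (mn mu Omega q nu X n z2)%:R / (mn mu Omega q nu X n z1)%:R <= C).
Proof.
set th := theta mu Omega nu X.
set mnf := mn mu Omega q nu X.
set dnf := dn mu Omega q nu X.
set tf := fun (z : R) (n : nat) => z / ((1 - z) * n%:R).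
have Hmn1 n z : (1 <= mnf n z)%N.
  by rewrite /mnf /mn; case: ifP => // _; exact: leq_maxl.
have Hmnub n z m : z < 1 -> (2 <= m <= q n)%N -> tf z n < th n m ->
    (m <= mnf n z)%N.
  move=> zl hm ht; rewrite /mnf /mn zl.
  apply: leq_trans (leq_maxr 1 _); apply: maxr_ub; [by rewrite ltnS | exact: ht].
have Hmnlub n z c : z < 1 -> (1 <= c)%N ->
    (forall m, (2 <= m <= q n)%N -> tf z n < th n m -> (m <= c)%N) ->
    (mnf n z <= c)%N.
  move=> zl c1 H; rewrite /mnf /mn zl geq_max c1 /=.
  by apply: maxr_lub => i; rewrite ltnS; apply: H.
have Hdnub n m : (1 <= m <= q n)%N -> 0 < th n m -> (m <= dnf n)%N.
  by move=> hm ht; rewrite /dnf /dn; apply: maxr_ub; [rewrite ltnS | exact: ht].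
have Hdnq n : (dnf n <= q n)%N.
  by rewrite /dnf /dn; apply: maxr_lub => i /andP[_]; rewrite ltnS.
have Htmono n z1 z2 : 0 < z1 -> z1 <= z2 -> z2 < 1 -> tf z1 n <= tf z2 n.
  move=> z1p z12 z2l; rewrite /tf.
  have [->|n0] := eqVneq n 0%N; first by rewrite !mulr0 !invr0 !mulr0.
  have np : 0 < n%:R :> R by rewrite ltr0n lt0n.
  have a1 : 0 < (1 - z1) * n%:R by rewrite mulr_gt0 // subr_gt0; lra.
  have a2 : 0 < (1 - z2) * n%:R by rewrite mulr_gt0 // subr_gt0; lra.
  rewrite ler_pdivrMr // mulrAC ler_pdivlMr //.
  nra.
have Htpos n z : 0 < z -> z < 1 -> (1 <= n)%N -> 0 < tf z n.
  move=> z0 z1 n1; rewrite /tf divr_gt0 // mulr_gt0 // ?subr_gt0 //.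
  by rewrite ltr0n.
have [N3 HN3] := HA3.
have Hmono n a b : (N3 <= n)%N -> (1 <= a)%N -> (a <= b)%N -> (b <= q n)%N ->
    th n b <= th n a.
  move=> hn ha; elim: b => [|b IH] hab hbq; first by move: ha hab; case: a.
  have [->|hne] := eqVneq a b.+1; first exact: lexx.
  have hab' : (a <= b)%N by rewrite -ltnS ltn_neqAle hne hab.
  apply: le_trans (IH hab' (ltnW hbq)).
  by apply: HN3 => //; apply: leq_trans ha hab'.
have Hzmono : forall n (z1 z2 : R), 0 < z1 -> z1 <= z2 -> (mnf n z2 <= mnf n z1)%N.
  move=> n z1 z2 z1p z12.
  have [hz2|hz2] := boolP (z2 < 1); last first.
    by have -> : mnf n z2 = 1%N by rewrite /mnf /mn (negbTE hz2).
  have hz1 : z1 < 1 by lra.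
  apply: Hmnlub => // m hm ht; apply: Hmnub => //.
  exact: le_lt_trans (Htmono n z1 z2 z1p z12 hz2) ht.
have Hinf : forall z : R, 0 < z -> z < 1 ->
    forall M : nat, exists N : nat, forall n, (N <= n)%N -> (M <= mnf n z)%N.
  move=> z z0 z1 M.
  case: (leqP M 1) => hM.
    by exists 0%N => n _; exact: leq_trans hM (Hmn1 n z).
  have [tb [tbp [K HK]]] := HA5 M (ltnW hM).
  exists (maxn K (Num.truncn (z / ((1 - z) * tb))).+1) => n.
  rewrite geq_max => /andP[hK hT].
  have [hMd htb] := HK n hK.
  apply: Hmnub => //; first by rewrite hM /= (leq_trans hMd (Hdnq n)).
  apply: lt_le_trans htb.
  have h1 := archimedean.Num.Theory.truncnS_gt (z / ((1 - z) * tb)).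
  have h2 : (Num.truncn (z / ((1 - z) * tb))).+1%:R <= n%:R :> R by rewrite ler_nat.
  have h3 : z / ((1 - z) * tb) < n%:R by exact: lt_le_trans h1 h2.
  have n1 : (1 <= n)%N by apply: leq_trans hT.
  have np : 0 < n%:R :> R by rewrite ltr0n.
  have zt : 0 < (1 - z) * tb by rewrite mulr_gt0 // subr_gt0.
  rewrite ltr_pdivrMr // in h3.
  rewrite /tf ltr_pdivrMr ?mulr_gt0 ?subr_gt0 //.
  have -> : tb * ((1 - z) * n%:R) = n%:R * ((1 - z) * tb) by ring.
  exact: h3.
split; first by split.
move=> [k [eta [K [k1 [eta1 [K1 Hk]]]]]].
have k0 : 0 <= k by lra.
set eta' := Num.max eta 0.
have eta'0 : 0 <= eta' by rewrite le_max lexx orbT.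
have eta'1 : eta' < 1 by rewrite gt_max eta1 ltr01.
have etale : eta <= eta' by rewrite le_max lexx.
set step := fun a : nat => Num.truncn (k * a%:R).
have Hstep_ge a : (a <= step a)%N.
  rewrite /step -{1}(archimedean.Num.Theory.natrK (R:=R) a).
  apply: archimedean.Num.Theory.le_truncn.
  by apply: ler_peMl => //; lra.
have Hstep_le a : (step a)%:R <= k * a%:R :> R.
  by rewrite /step archimedean.Num.Theory.truncn_le mulr_ge0 // ler0n.
have key : forall z1 z2 : R, 0 < z1 -> z1 <= z2 -> z2 < 1 ->
    exists (C : R) (N : nat), forall n, (N <= n)%N ->
      (mnf n z1)%:R / (mnf n z2)%:R <= C /\ (mnf n z2)%:R / (mnf n z1)%:R <= C.
  move=> z1 z2 z1p z12 z2l.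
  have z1l : z1 < 1 by lra.
  have z2p : 0 < z2 by lra.
  set c := (z2 / (1 - z2)) / (z1 / (1 - z1)).
  have c0 : 0 <= c.
    by rewrite /c divr_ge0 // divr_ge0 ?subr_ge0 //; lra.
  have [J HJ] := @geom_small _ eta' c eta'0 eta'1 c0.
  set a := fun (i n : nat) => iter i step (mnf n z2).+1.
  have Ha_mono n i d : (a i n <= a (i + d) n)%N.
    elim: d => [|d IH]; first by rewrite addn0.
    by rewrite addnS /a iterS; apply: leq_trans IH (Hstep_ge _).
  have Ha_mono' n i j : (i <= j)%N -> (a i n <= a j n)%N.
    by move=> hij; rewrite -(subnKC hij); apply: Ha_mono.
  have Ha_ub n i : (a i n)%:R <= k ^+ i * (mnf n z2).+1%:R :> R.
    elim: i => [|i IH]; first by rewrite expr0 mul1r /a /=.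
    rewrite /a iterS; apply: le_trans (Hstep_le _) _.
    rewrite exprS -mulrA; exact: ler_wpM2l.
  have Ha0 n i : ((mnf n z2).+1 <= a i n)%N by apply: (Ha_mono' n 0%N).
  set s := fun (i n : nat) => if (a i n <= dnf n)%N then a i n else dnf n.
  have Hs i n : (K <= n)%N -> (a i n <= dnf n)%N ->
      theta_ext mu Omega q nu X n (a i.+1 n) / theta_ext mu Omega q nu X n (a i n)
        <= eta.
    move=> hn hd.
    have P1 : forall M : nat, exists N : nat, forall n, (N <= n)%N -> (M <= s i n)%N.
      move=> M.
      have [N1 HN1] := Hinf z2 z2p z2l M.
      have [tb [_ [N2 HN2]]] := HA5 (maxn M 1) (leq_maxr _ _).
      exists (maxn N1 N2) => n'; rewrite geq_max => /andP[h1 h2].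
      have hd' : (M <= dnf n')%N.
        by apply: leq_trans (leq_maxl M 1) (HN2 n' h2).1.
      rewrite /s; case: ifP => // _.
      apply: leq_trans (HN1 n' h1) _.
      exact: leq_trans (leqnSn _) (Ha0 n' i).
    have P2 : forall n, (s i n <= dnf n)%N.
      by move=> n'; rewrite /s; case: ifP.
    have := Hk (s i) P1 P2 n hn.
    by rewrite /s hd.
  exists (2 * k ^+ J), (maxn (maxn K N3) 1) => n.
  rewrite !geq_max => /andP[/andP[hK hN3] hn1].
  set l := mnf n z2.
  have hl1 : (1 <= l)%N by apply: Hmn1.
  have t1p : 0 < tf z1 n by apply: Htpos.
  have np : 0 < n%:R :> R by rewrite ltr0n.
  have Htc : tf z2 n = c * tf z1 n.
    rewrite /tf /c; field.
    have e1 : 1 - z1 != 0 by rewrite gt_eqF // subr_gt0.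
    have e2 : 1 - z2 != 0 by rewrite gt_eqF // subr_gt0.
    by rewrite e1 e2 !gt_eqF.
  have Hlt m' : (2 <= m' <= q n)%N -> tf z1 n < th n m' -> (m' < a J n)%N.
    move=> hm' ht; rewrite ltnNge; apply/negP => hJ.
    have thp : 0 < th n m' by apply: lt_trans ht.
    have hm'q : (m' <= q n)%N by case/andP: hm'.
    have hm'd : (m' <= dnf n)%N.
      apply: Hdnub => //; rewrite hm'q andbT.
      by case/andP: hm' => h _; apply: ltnW.
    have Hai i : (i <= J)%N ->
        [/\ (1 <= a i n)%N, (a i n <= m')%N, (a i n <= q n)%N
          & th n m' <= th n (a i n)].
      move=> hi.
      have h1 : (1 <= a i n)%N by apply: leq_trans (Ha0 n i).
      have h2 : (a i n <= m')%N by apply: leq_trans (Ha_mono' n i J hi) hJ.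
      have h3 : (a i n <= q n)%N by apply: leq_trans h2 hm'q.
      by split => //; apply: Hmono.
    have Hext i : (i <= J)%N -> theta_ext mu Omega q nu X n (a i n) = th n (a i n).
      by move=> hi; have [h1 _ h3 _] := Hai i hi; rewrite /theta_ext h1 h3.
    have Hl1 : th n l.+1 <= tf z2 n.
      rewrite leNgt; apply/negP => h.
      have [_ h2 h3 _] := Hai 0%N (leq0n _).
      have hq : (2 <= l.+1 <= q n)%N by rewrite ltnS hl1 /=; exact: h3.
      by have := Hmnub n z2 l.+1 z2l hq h; rewrite ltnn.
    have Hchain i : (i <= J)%N -> th n (a i n) <= eta' ^+ i * tf z2 n.
      elim: i => [|i IH] hi; first by rewrite expr0 mul1r.
      have hi' : (i <= J)%N by apply: ltnW.
      have [_ h2 _ h4] := Hai i hi'.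
      have ypos : 0 < th n (a i n) by apply: lt_le_trans h4.
      have := Hs i n hK (leq_trans h2 hm'd).
      rewrite (Hext i hi') (Hext i.+1 hi) ler_pdivrMr //.
      move=> H1; apply: le_trans H1 _.
      rewrite exprS -mulrA.
      apply: le_trans (ler_wpM2r (ltW ypos) etale) _.
      by apply: (ler_wpM2l eta'0); exact: IH.
    have := Hchain J (leqnn J).
    have [_ _ _ h4] := Hai J (leqnn J).
    rewrite Htc mulrA => H.
    have : eta' ^+ J * c * tf z1 n <= tf z1 n.
      by rewrite -[X in _ <= X]mul1r; apply: ler_wpM2r => //; apply: ltW.
    move=> H2.
    have := lt_le_trans (lt_le_trans ht h4) (le_trans H H2).
    by rewrite ltxx.
  have Hpred : forall x : nat, (2 <= x)%N -> (1 <= x.-1)%N /\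
      (forall y, (y < x)%N -> (y <= x.-1)%N) /\ (forall y, (y <= x.-1)%N -> (y < x)%N).
    case=> [|x] // hx /=.
  have hJ2 : (2 <= a J n)%N by apply: leq_trans (Ha0 n J); rewrite ltnS.
  have Hm : (mnf n z1 < a J n)%N.
    have : (mnf n z1 <= (a J n).-1)%N.
      have [P1 [P2 _]] := Hpred _ hJ2.
      apply: Hmnlub => //.
      move=> m' h1 h2; exact: P2 (Hlt m' h1 h2).
    by have [_ [_ P3]] := Hpred _ hJ2; apply: P3.
  have kJ : 1 <= k ^+ J by apply: exprn_ege1; apply: ltW.
  have kJ0 : 0 <= k ^+ J by apply: le_trans kJ; exact: ler01.
  have kJ2 : 1 <= 2 * k ^+ J.
    apply: le_trans kJ _; rewrite mulr_natl mulr2n; by rewrite lerDl.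
  have lp : 0 < l%:R :> R by rewrite ltr0n.
  have mp : 0 < (mnf n z1)%:R :> R by rewrite ltr0n; apply: Hmn1.
  have Hlm : (l <= mnf n z1)%N by apply: Hzmono.
  split.
  - rewrite ler_pdivrMr //.
    have h1 : (mnf n z1)%:R <= (a J n)%:R :> R by rewrite ler_nat ltnW.
    have h2 := Ha_ub n J.
    have h3 : l.+1%:R <= 2 * l%:R :> R.
      by rewrite -natrM ler_nat mul2n -addnn -addn1 leq_add2l.
    have h4 : k ^+ J * l.+1%:R <= k ^+ J * (2 * l%:R).
      by apply: (ler_wpM2l kJ0).
    rewrite -/l in h2.
    have -> : 2 * k ^+ J * l%:R = k ^+ J * (2 * l%:R) by ring.
    exact: le_trans h1 (le_trans h2 h4).
  - rewrite ler_pdivrMr //.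
    have h5 : l%:R <= (mnf n z1)%:R :> R by rewrite ler_nat.
    apply: le_trans h5 _; apply: ler_peMl => //; exact: ltW.
move=> z1 z2 z1p z1l z2p z2l.
case: (lerP z1 z2) => h; first exact: key.
have [C [N HN]] := key z2 z1 z2p (ltW h) z1l.
exists C, N => n hn; have [h1 h2] := HN n hn; by split.
Qed.
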